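(* Let $X$ be an $M$-thin combinatorial $2$-complex and $\lambda>0$. Let $\mathcal H\le\mathrm{Aut}(X)$, let $Y\subset X$ be an $\mathcal H$-cocompact subcomplex, let $R$ be a $2$-cell of $X$ that is a missing $3$-shell of $Y$ with inner path $S$ and outer path $Q$, and let $Y'=Y\cup\bigcup_{h\in\mathcal H}hR$ be the $(\mathcal H,R)$-enlargement of $Y$. If $|S|<3\lambda|\partial R|$ and $3\lambda M<\frac{1}{|\mathrm{Aut}_{\mathcal H}(R)|}$, then $\mathrm{per}(Y',\mathcal H)<\mathrm{per}(Y,\mathcal H)$.
   Context: $\mathrm{Aut}(X)$ is the group of cellular automorphisms. A side at a $1$-cell $x$ is a pair $(R,r)$ with $R$ a $2$-cell and $r$ a $1$-cell of the boundary cycle $\partial R$ mapping to $x$; $X$ is $M$-thin if each $1$-cell has at most $M$ sides. For a subcomplex $Z$, a side at $x$ lifts to $Z$ if $x\subset Z$ and $(R,r)\to(X,x)$ factors through $Z$; $\mathrm{Missing}_X(Z,x)$ is the set of sides at $x$ not lifting to $Z$. $Z$ is $\mathcal H$-cocompact if $\mathcal H$-invariant with finitely many $\mathcal H$-orbits of cells, and then $\mathrm{per}(Z,\mathcal H)=\sum_i|\mathrm{Missing}_X(Z,z_i)|$ with $z_i$ representatives of the $\mathcal H$-orbits of $1$-cells of $Z$. A piece is a nontrivial path factoring through boundary cycles of two $2$-cells in essentially distinct ways (no compatible homeomorphism of the boundary cycles). A missing $3$-shell of $Y$ is a $2$-cell $R$ of $X$ not contained in $Y$ with $\partial R=QS$,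 where the outer path $Q$ lies in $Y$ and the inner path $S$ is a concatenation of at most $3$ pieces. $\mathrm{Aut}_{\mathcal H}(R)=\mathrm{Stab}_{\mathcal H}(R)/\mathrm{Fix}_{\mathcal H}(R)$, with $\mathrm{Fix}_{\mathcal H}(R)$ the pointwise stabilizer. *)

(* Defs.v *)
From Stdlib Require Import Reals List Arith Bool ClassicalEpsilon.
Import ListNotations.
Set Implicit Arguments.

(* A combinatorial 2-complex: vertices, 1-cells (with a reference orientation
   src -> tgt), and 2-cells, each attached along a closed combinatorial path
   [bd R], the image of its boundary cycle: the j-th edge of the cycle C_n
   (from cycle-vertex j to j+1 mod n) is sent to the oriented 1-cell
   [nth j (bd R)] = (e, o), o = true meaning e is traversed src -> tgt. *)
Record complex2 := Complex2 {
  Vx : Type; Ex : Type; Fx : Type;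
  src : Ex -> Vx; tgt : Ex -> Vx;
  bd : Fx -> list (Ex * bool) }.

Unset Strict Implicit.
Section Defs.
Variable X : complex2.

Definition ostart (o : Ex X * bool) : Vx X :=
  if snd o then src X (fst o) else tgt X (fst o).
Definition oend (o : Ex X * bool) : Vx X :=
  if snd o then tgt X (fst o) else src X (fst o).

Definition blen (R : Fx X) : nat := length (bd X R).

Definition is_complex2 : Prop :=
  forall R, bd X R <> [] /\
    forall j o1 o2, nth_error (bd X R) j = Some o1 ->
      nth_error (bd X R) ((S j) mod blen R) = Some o2 -> oend o1 = ostart o2.

(* oriented edges of the cycle graph C_n : (j, b), j < n; b = true means
   traversed from cycle-vertex j to j+1 mod n *)
Definition cstart (n : nat) (c : nat * bool) : nat :=
  if snd c then fst c else (S (fst c)) mod n.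
Definition cend (n : nat) (c : nat * bool) : nat :=
  if snd c then (S (fst c)) mod n else fst c.

Definition img (R : Fx X) (c : nat * bool) : option (Ex X * bool) :=
  option_map (fun o => (fst o, Bool.eqb (snd o) (snd c))) (nth_error (bd X R) (fst c)).

Definition cpath (n : nat) (p : list (nat * bool)) : Prop :=
  p <> [] /\ Forall (fun c => fst c < n) p /\
  forall i c1 c2, nth_error p i = Some c1 -> nth_error p (S i) = Some c2 ->
    cend n c1 = cstart n c2.

(* the cellular automorphisms of C_n: rotation by k (d = true) or the
   reflection sending edge j to edge k - j reversed (d = false) *)
Definition cyc (n k : nat) (d : bool) (c : nat * bool) : nat * bool :=
  if d then ((k + fst c) mod n, snd c) else ((k + (n - fst c)) mod n, negb (snd c)).

Definition is_cyc_iso (n m : nat) (sigma : nat * bool -> nat * bool) : Prop :=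
  n = m /\ exists k d, forall c, fst c < n -> sigma c = cyc n k d c.

(* a piece: a nontrivial path factoring through boundary cycles of two
   2-cells in essentially distinct ways *)
Definition piece (P : list (Ex X * bool)) : Prop :=
  P <> [] /\
  exists R1 R2 p1 p2,
    cpath (blen R1) p1 /\ cpath (blen R2) p2 /\
    map (img R1) p1 = map Some P /\ map (img R2) p2 = map Some P /\
    ~ (exists sigma, is_cyc_iso (blen R1) (blen R2) sigma /\
         (forall c, fst c < blen R1 -> img R2 (sigma c) = img R1 c) /\
         map sigma p1 = p2).

(* raw cellular maps: on vertices, 1-cells (with orientation flag: true =
   orientation preserved), 2-cells, and on each boundary cycle *)
Record amap := AMap {
  mV : Vx X -> Vx X; mE : Ex X -> Ex X; mO : Ex X -> bool;
  mF : Fx X -> Fx X; mB : Fx X -> nat * bool -> nat * bool }.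

Definition oact (g : amap) (o : Ex X * bool) : Ex X * bool :=
  (mE g (fst o), Bool.eqb (mO g (fst o)) (snd o)).

Definition bij {A : Type} (f : A -> A) : Prop :=
  (forall x y, f x = f y -> x = y) /\ (forall y, exists x, f x = y).

Definition is_aut (g : amap) : Prop :=
  bij (mV g) /\ bij (mE g) /\ bij (mF g) /\
  (forall e, (mO g e = true -> src X (mE g e) = mV g (src X e) /\
                               tgt X (mE g e) = mV g (tgt X e)) /\
             (mO g e = false -> src X (mE g e) = mV g (tgt X e) /\
                                tgt X (mE g e) = mV g (src X e))) /\
  (forall R, is_cyc_iso (blen R) (blen (mF g R)) (mB g R) /\
     forall c, fst c < blen R ->
       img (mF g R) (mB g R c) = option_map (oact g) (img R c)).

Definition acomp (g2 g1 : amap) : amap :=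
  AMap (fun v => mV g2 (mV g1 v)) (fun e => mE g2 (mE g1 e))
       (fun e => Bool.eqb (mO g2 (mE g1 e)) (mO g1 e))
       (fun R => mF g2 (mF g1 R)) (fun R c => mB g2 (mF g1 R) (mB g1 R c)).

Definition aid : amap :=
  AMap (fun v => v) (fun e => e) (fun _ => true) (fun R => R) (fun _ c => c).

Definition aeq (g1 g2 : amap) : Prop :=
  (forall v, mV g1 v = mV g2 v) /\ (forall e, mE g1 e = mE g2 e) /\
  (forall e, mO g1 e = mO g2 e) /\ (forall R, mF g1 R = mF g2 R) /\
  (forall R c, fst c < blen R -> mB g1 R c = mB g2 R c).

Definition subgroup (H : amap -> Prop) : Prop :=
  (forall g, H g -> is_aut g) /\
  (exists g, H g /\ aeq g aid) /\
  (forall g1 g2, H g1 -> H g2 -> exists g, H g /\ aeq g (acomp g1 g2)) /\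
  (forall g, H g -> exists g', H g' /\ aeq (acomp g g') aid /\ aeq (acomp g' g) aid).

Record scx := Scx { ZV : Vx X -> Prop; ZE : Ex X -> Prop; ZF : Fx X -> Prop }.

Definition is_subcomplex (Z : scx) : Prop :=
  (forall e, ZE Z e -> ZV Z (src X e) /\ ZV Z (tgt X e)) /\
  (forall R, ZF Z R -> forall j o, nth_error (bd X R) j = Some o -> ZE Z (fst o)).

Definition invariant (H : amap -> Prop) (Z : scx) : Prop :=
  forall g, H g ->
    (forall v, ZV Z v -> ZV Z (mV g v)) /\ (forall e, ZE Z e -> ZE Z (mE g e)) /\
    (forall R, ZF Z R -> ZF Z (mF g R)).

Definition cocompact (H : amap -> Prop) (Z : scx) : Prop :=
  invariant H Z /\
  exists (vs : list (Vx X)) (es : list (Ex X)) (fs : list (Fx X)),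
    (forall v, In v vs -> ZV Z v) /\ (forall e, In e es -> ZE Z e) /\
    (forall R, In R fs -> ZF Z R) /\
    (forall v, ZV Z v -> exists g z, H g /\ In z vs /\ mV g z = v) /\
    (forall e, ZE Z e -> exists g z, H g /\ In z es /\ mE g z = e) /\
    (forall R, ZF Z R -> exists g z, H g /\ In z fs /\ mF g z = R).

(* sides (R, r): r the index of a 1-cell of the boundary cycle of R *)
Definition side_at (x : Ex X) (s : Fx X * nat) : Prop :=
  exists o, nth_error (bd X (fst s)) (snd s) = Some o /\ fst o = x.

Definition thin (M : nat) : Prop :=
  forall x, exists l : list (Fx X * nat),
    NoDup l /\ (forall s, In s l <-> side_at x s) /\ length l <= M.

Definition lifts (Z : scx) (x : Ex X) (s : Fx X * nat) : Prop :=
  ZE Z x /\ ZF Z (fst s).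

Definition missing (Z : scx) (x : Ex X) (s : Fx X * nat) : Prop :=
  side_at x s /\ ~ lifts Z x s.

(* cardinality of a finite set (meaningful when the set is finite) *)
Definition fincard {T : Type} (A : T -> Prop) : nat :=
  epsilon (inhabits 0)
    (fun n => exists l : list T, NoDup l /\ (forall x, In x l <-> A x) /\ length l = n).

Definition orbit_reps (H : amap -> Prop) (Z : scx) (s : list (Ex X)) : Prop :=
  (forall z, In z s -> ZE Z z) /\
  (forall e, ZE Z e -> exists g z, H g /\ In z s /\ mE g z = e) /\
  (forall i j a b g, nth_error s i = Some a -> nth_error s j = Some b ->
     H g -> mE g a = b -> i = j).

Definition per (H : amap -> Prop) (Z : scx) : nat :=
  epsilon (inhabits 0)
    (fun n => exists s, orbit_reps H Z s /\
       n = list_sum (map (fun z => fincard (missing Z z)) s)).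

Definition enlarge (H : amap -> Prop) (Y : scx) (R : Fx X) : scx :=
  Scx (fun v => ZV Y v \/ exists g j o, H g /\ nth_error (bd X (mF g R)) j = Some o /\
                           (v = src X (fst o) \/ v = tgt X (fst o)))
      (fun e => ZE Y e \/ exists g j o, H g /\ nth_error (bd X (mF g R)) j = Some o /\
                           e = fst o)
      (fun F => ZF Y F \/ exists g, H g /\ F = mF g R).

(* the boundary cycle of R read from cycle-edge k, forwards (d = true) or
   backwards (d = false) *)
Definition reading (R : Fx X) (k : nat) (d : bool) : list (option (Ex X * bool)) :=
  map (fun j => img R (cyc (blen R) k d (j, true))) (seq 0 (blen R)).

Definition missing_3shell (Y : scx) (R : Fx X) (Q S : list (Ex X * bool)) : Prop :=
  ~ ZF Y R /\
  (exists k d, reading R k d = map Some (Q ++ S)) /\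
  (match Q ++ S with o :: _ => ZV Y (ostart o) | [] => False end) /\
  (forall o, In o Q -> ZE Y (fst o)) /\
  exists ps : list (list (Ex X * bool)),
    length ps <= 3 /\ concat ps = S /\ Forall piece ps.

(* Aut_H(R) = Stab_H(R)/Fix_H(R) *)
Definition stabH (H : amap -> Prop) (R : Fx X) (g : amap) : Prop :=
  H g /\ mF g R = R.
Definition fixes (R : Fx X) (g : amap) : Prop :=
  mF g R = R /\ forall c, fst c < blen R -> mB g R c = c.
Definition in_coset (H : amap -> Prop) (R : Fx X) (a b : amap) : Prop :=
  exists f, H f /\ fixes R f /\ aeq b (acomp a f).

Definition autH_card (H : amap -> Prop) (R : Fx X) : nat :=
  epsilon (inhabits 0)
    (fun n => exists l : list amap,
       (forall g, In g l -> stabH H R g) /\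
       (forall g, stabH H R g -> exists a, In a l /\ in_coset H R a g) /\
       (forall i j a b, nth_error l i = Some a -> nth_error l j = Some b ->
          in_coset H R a b -> i = j) /\
       length l = n).

End Defs.

(* Main.v *)
Require Import Defs.
From Stdlib Require Import Reals List Arith.
From Stdlib Require Import Lia Permutation ClassicalEpsilon Classical Psatz.
Import ListNotations.


Definition dec (P : Prop) : bool := if excluded_middle_informative P then true else false.
Lemma dec_true P : dec P = true <-> P.
Proof. unfold dec; destruct (excluded_middle_informative P); split; intros; auto; try discriminate; contradiction. Qed.
Lemma dec_false P : dec P = false <-> ~ P.
Proof. unfold dec; destruct (excluded_middle_informative P); split; intros; auto; try discriminate; contradiction. Qed.

Lemma my_choice {A B : Type} (b0 : B) (P : A -> B -> Prop) :
  (forall a, exists b, P a b) -> exists f, forall a, P a (f a).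
Proof.
  intros H. exists (fun a => epsilon (inhabits b0) (P a)).
  intros a. apply epsilon_spec. apply H.
Qed.

Lemma fincard_eq {T : Type} (A : T -> Prop) l :
  NoDup l -> (forall x, In x l <-> A x) -> fincard A = length l.
Proof.
  intros Hn Hi. unfold fincard.
  destruct (epsilon_spec (inhabits 0) (fun n => exists l, NoDup l /\ (forall x, In x l <-> A x) /\ length l = n)) as [l' [Hn' [Hi' Hl]]].
  { exists (length l), l; auto. }
  rewrite <- Hl. apply Nat.le_antisymm; apply NoDup_incl_length; auto; intros x Hx.
  - apply Hi. apply Hi'. auto.
  - apply Hi'. apply Hi. auto.
Qed.

Lemma fincard_filter {T : Type} (A B : T -> Prop) L :
  NoDup L -> (forall x, In x L <-> B x) -> (forall x, A x -> B x) ->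
  fincard A = length (filter (fun x => dec (A x)) L).
Proof.
  intros Hn Hi Hab. apply fincard_eq. apply NoDup_filter; auto.
  intros x. rewrite filter_In, dec_true. split; [tauto|]. intros; split; auto. apply Hi; auto.
Qed.

Lemma filter_sum2 {T : Type} (A B C : T -> Prop) (L : list T) :
  (forall x, In x L -> A x -> C x) -> (forall x, In x L -> B x -> C x) ->
  (forall x, In x L -> A x -> B x -> False) ->
  length (filter (fun x => dec (A x)) L) + length (filter (fun x => dec (B x)) L)
  <= length (filter (fun x => dec (C x)) L).
Proof.
  induction L as [|a L IH]; intros HA HB HAB; simpl; auto.
  assert (IH' := IH (fun x h => HA x (or_intror h)) (fun x h => HB x (or_intror h))
     (fun x h => HAB x (or_intror h))).
  destruct (dec (A a)) eqn:Ea; destruct (dec (B a)) eqn:Eb; destruct (dec (C a)) eqn:Ec;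
    simpl; try lia.
  - rewrite dec_true in Ea. rewrite dec_true in Eb. exfalso. apply (HAB a); [now left|assumption|assumption].
  - rewrite dec_true in Ea. rewrite dec_true in Eb. exfalso. apply (HAB a); [now left|assumption|assumption].
  - rewrite dec_true in Ea. rewrite dec_false in Ec. exfalso. apply Ec, HA; [now left|assumption].
  - rewrite dec_true in Eb. rewrite dec_false in Ec. exfalso. apply Ec, HB; [now left|assumption].
Qed.

Lemma filter_lt {T : Type} (f : T -> bool) L x :
  In x L -> f x = false -> length (filter f L) < length L.
Proof.
  induction L as [|a L IH]; simpl; intros Hx Hf; [contradiction|].
  destruct Hx as [<-|Hx].
  - rewrite Hf. pose proof (filter_length_le f L). lia.
  - destruct (f a); simpl; specialize (IH Hx Hf); lia.
Qed.

Definition Rd {T : Type} (eqv : T -> T -> Prop) (a b : T) : Prop := ~ eqv a b /\ ~ eqv b a.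

Lemma idx_to_FOP {T : Type} (eqv : T -> T -> Prop) (l : list T) :
  (forall i j a b, nth_error l i = Some a -> nth_error l j = Some b -> eqv a b -> i = j) ->
  ForallOrdPairs (Rd eqv) l.
Proof.
  induction l as [|x l IH]; intros H; constructor.
  - apply Forall_forall. intros y Hy. apply In_nth_error in Hy as [j Hj].
    split; intros He.
    + specialize (H 0 (S j) x y eq_refl Hj He). discriminate.
    + specialize (H (S j) 0 y x Hj eq_refl He). discriminate.
  - apply IH. intros i j a b Ha Hb He. specialize (H (S i) (S j) a b Ha Hb He). congruence.
Qed.

Lemma FOP_to_idx {T : Type} (eqv : T -> T -> Prop) (l : list T) :
  ForallOrdPairs (Rd eqv) l ->
  (forall i j a b, nth_error l i = Some a -> nth_error l j = Some b -> eqv a b -> i = j).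
Proof.
  induction 1 as [|x l Hf Hl IH]; intros i j a b Ha Hb He.
  - destruct i; discriminate.
  - rewrite Forall_forall in Hf.
    destruct i, j; simpl in *; auto.
    + injection Ha as <-. apply nth_error_In in Hb. destruct (Hf _ Hb). contradiction.
    + injection Hb as <-. apply nth_error_In in Ha. destruct (Hf _ Ha). contradiction.
    + f_equal. eauto.
Qed.

Lemma FOP_filter {T : Type} (R : T -> T -> Prop) (f : T -> bool) l :
  ForallOrdPairs R l -> ForallOrdPairs R (filter f l).
Proof.
  induction 1 as [|x l Hf Hl IH]; simpl; [constructor|].
  destruct (f x); auto. constructor; auto.
  rewrite Forall_forall in *. intros y Hy. apply filter_In in Hy. apply Hf; tauto.
Qed.

Lemma FOP_mid1 {T : Type} (R : T -> T -> Prop) l1 a l2 :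
  ForallOrdPairs R (l1 ++ a :: l2) -> ForallOrdPairs R (l1 ++ l2).
Proof.
  induction l1 as [|x l1 IH]; simpl; intros H; inversion H; subst; auto.
  constructor; auto. rewrite Forall_forall in *. intros y Hy. apply H2.
  apply in_app_or in Hy. apply in_or_app. simpl. tauto.
Qed.

Lemma FOP_mid2 {T : Type} (R : T -> T -> Prop) l1 a l2 y :
  ForallOrdPairs R (l1 ++ a :: l2) -> In y (l1 ++ l2) -> R a y \/ R y a.
Proof.
  induction l1 as [|x l1 IH]; simpl; intros H Hy; inversion H; subst.
  - rewrite Forall_forall in H2. left; auto.
  - destruct Hy as [<-|Hy].
    + right. rewrite Forall_forall in H2. apply H2. apply in_or_app; simpl; auto.
    + auto.
Qed.

Lemma FOP_eq {T : Type} (eqv : T -> T -> Prop) l a b :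
  ForallOrdPairs (Rd eqv) l -> In a l -> In b l -> eqv a b -> a = b.
Proof.
  intros H Ha Hb He. destruct (ForallOrdPairs_In H a b Ha Hb) as [|[[? ?]|[? ?]]]; auto; contradiction.
Qed.

Lemma FOP_NoDup {T : Type} (eqv : T -> T -> Prop) l :
  (forall x, eqv x x) -> ForallOrdPairs (Rd eqv) l -> NoDup l.
Proof.
  intros Hr. induction 1 as [|x l Hf Hl IH]; constructor; auto.
  intros Hx. rewrite Forall_forall in Hf. destruct (Hf x Hx). auto.
Qed.

Lemma dedupe {T : Type} (eqv : T -> T -> Prop) :
  (forall x, eqv x x) ->
  (forall x y, eqv x y -> eqv y x) -> (forall x y z, eqv x y -> eqv y z -> eqv x z) ->
  forall L, exists l, incl l L /\ (forall x, In x L -> exists y, In y l /\ eqv y x) /\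
     ForallOrdPairs (Rd eqv) l.
Proof.
  intros Hr Hs Ht. induction L as [|x L IH].
  - exists []. repeat split; [intros ? []|intros ? []|constructor].
  - destruct IH as [l [Hi [Hc Hf]]].
    destruct (classic (exists y, In y l /\ eqv y x)) as [Hy|Hy].
    + exists l. repeat split.
      * intros z Hz. right; auto.
      * intros z [Hz|Hz]; [subst|]; auto.
      * auto.
    + exists (x :: l). repeat split.
      * intros z [Hz|Hz]; [subst; left; auto|right; auto].
      * intros z [Hz|Hz]. subst. exists z; split; [left; auto|auto].
        destruct (Hc z Hz) as [y [Hy1 Hy2]]. exists y; split; [right|]; auto.
      * constructor; auto. apply Forall_forall. intros y Hyl. split; intros He.
        -- apply Hy. exists y; split; auto.
        -- apply Hy. exists y; split; auto.
Qed.


Lemma reps_perm {T : Type} (eqv : T -> T -> Prop) (f : T -> nat) :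
  (forall x y, eqv x y -> eqv y x) -> (forall x y z, eqv x y -> eqv y z -> eqv x z) ->
  (forall x y, eqv x y -> f x = f y) ->
  forall s t (E : T -> Prop), (forall z, In z s -> E z) -> (forall z, In z t -> E z) ->
  (forall e, E e -> exists z, In z s /\ eqv z e) -> (forall e, E e -> exists z, In z t /\ eqv z e) ->
  ForallOrdPairs (Rd eqv) s -> ForallOrdPairs (Rd eqv) t -> Permutation (map f s) (map f t).
Proof.
  intros Hs Ht Hf. induction s as [|z s IH]; intros t E Hs1 Ht1 Hs2 Ht2 Fs Ft.
  - destruct t as [|w t]; [constructor|].
    destruct (Hs2 w (Ht1 w (or_introl eq_refl))) as [? [[] _]].
  - destruct (Ht2 z (Hs1 z (or_introl eq_refl))) as [w [Hw Hwz]].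
    apply in_split in Hw as [t1 [t2 ->]].
    rewrite map_app. simpl. rewrite (Hf w z Hwz).
    apply Permutation_cons_app. rewrite <- map_app.
    inversion Fs; subst. rewrite Forall_forall in H1.
    apply (IH (t1 ++ t2) (fun e => E e /\ ~ eqv z e)).
    + intros y Hy. split; [apply Hs1; right; auto|]. destruct (H1 y Hy); auto.
    + intros y Hy. split.
      * apply Ht1. apply in_app_or in Hy. apply in_or_app. simpl; tauto.
      * intros Hzy. destruct (FOP_mid2 _ _ _ _ _ Ft Hy) as [[A1 A2]|[A1 A2]].
        -- apply A1. eauto.
        -- apply A2. eauto.
    + intros e [He Hne]. destruct (Hs2 e He) as [y [[<-|Hy] Hye]]; [contradiction|eauto].
    + intros e [He Hne]. destruct (Ht2 e He) as [y [Hy Hye]].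
      apply in_app_or in Hy. destruct Hy as [Hy|[<-|Hy]].
      * exists y; split; auto. apply in_or_app; auto.
      * exfalso. apply Hne. eauto.
      * exists y; split; auto. apply in_or_app; auto.
    + auto.
    + eapply FOP_mid1; eauto.
Qed.

Lemma sum_filter {T : Type} (f : T -> nat) (p : T -> bool) l :
  list_sum (map f l) = list_sum (map f (filter p l)) + list_sum (map f (filter (fun x => negb (p x)) l)).
Proof. induction l as [|a l IH]; simpl; auto. destruct (p a); simpl; lia. Qed.

Lemma sum_le {T : Type} (f g : T -> nat) l :
  (forall x, In x l -> f x <= g x) -> list_sum (map f l) <= list_sum (map g l).
Proof. induction l as [|a l IH]; simpl; intros H; auto. pose proof (H a (or_introl eq_refl)).
  assert (list_sum (map f l) <= list_sum (map g l)) by (apply IH; auto). lia. Qed.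

Lemma sum_const_le {T : Type} (f : T -> nat) c l :
  (forall x, In x l -> f x <= c) -> list_sum (map f l) <= length l * c.
Proof. induction l as [|a l IH]; simpl; intros H; auto. pose proof (H a (or_introl eq_refl)).
  assert (list_sum (map f l) <= length l * c) by (apply IH; auto). lia. Qed.

Lemma sum_add {T : Type} (f g : T -> nat) l :
  list_sum (map (fun x => f x + g x) l) = list_sum (map f l) + list_sum (map g l).
Proof. induction l as [|a l IH]; simpl; lia. Qed.

Lemma length_concat_map {T U : Type} (F : T -> list U) l :
  length (concat (map F l)) = list_sum (map (fun x => length (F x)) l).
Proof. induction l as [|a l IH]; simpl; auto. rewrite length_app. lia. Qed.

Lemma NoDup_map_inj {T U : Type} (f : T -> U) l :
  (forall x y, In x l -> In y l -> f x = f y -> x = y) -> NoDup l -> NoDup (map f l).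
Proof.
  induction l as [|a l IH]; simpl; intros Hi Hn; constructor.
  - intros Hin. apply in_map_iff in Hin as [y [Hy Hyl]].
    inversion Hn; subst. assert (y = a) by (apply Hi; auto). subst; contradiction.
  - inversion Hn; subst. apply IH; auto.
Qed.

Lemma mod_inj n x y : 0 < n -> x mod n = y mod n -> x <= y -> y < x + n -> x = y.
Proof.
  intros Hn Hm Hxy Hy.
  pose proof (Nat.div_mod x n ltac:(lia)). pose proof (Nat.div_mod y n ltac:(lia)).
  pose proof (Nat.mod_upper_bound x n ltac:(lia)).
  set (a := x / n) in *. set (b := y / n) in *.
  assert (a <= b).
  { destruct (Nat.le_gt_cases a b); auto. assert (n * b + n <= n * a) by nia. lia. }
  assert (b <= a).
  { destruct (Nat.le_gt_cases b a); auto. assert (n * a + n <= n * b) by nia. lia. }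
  assert (a = b) by lia. lia.
Qed.

Lemma cyc_lt n k d c : 0 < n -> fst (cyc n k d c) < n.
Proof. intros. unfold cyc. destruct d; simpl; apply Nat.mod_upper_bound; lia. Qed.

Lemma cyc_fst n k d i b b' : fst (cyc n k d (i, b)) = fst (cyc n k d (i, b')).
Proof. unfold cyc. destruct d; reflexivity. Qed.

Lemma cyc_inj n k d i i' b b' : i < n -> i' < n ->
  fst (cyc n k d (i, b)) = fst (cyc n k d (i', b')) -> i = i'.
Proof.
  intros Hi Hi'. unfold cyc. destruct d; simpl; intros H.
  - destruct (Nat.le_gt_cases i i').
    + assert (k + i = k + i') by (apply (mod_inj n); lia). lia.
    + assert (k + i' = k + i) by (apply (mod_inj n); lia). lia.
  - destruct (Nat.le_gt_cases i i').
    + assert (k + (n - i') = k + (n - i)) by (apply (mod_inj n); lia). lia.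
    + assert (k + (n - i) = k + (n - i')) by (apply (mod_inj n); lia). lia.
Qed.

Lemma cyc_surj n k d : 0 < n -> forall p, p < n -> exists i, i < n /\ fst (cyc n k d (i, true)) = p.
Proof.
  intros Hn p Hp.
  set (F := fun i => fst (cyc n k d (i, true))).
  assert (ND : NoDup (map F (seq 0 n))).
  { apply NoDup_map_inj; [|apply seq_NoDup]. intros x y Hx Hy. apply in_seq in Hx, Hy.
    unfold F. apply cyc_inj; lia. }
  assert (Hinc : incl (seq 0 n) (map F (seq 0 n))).
  { apply (NoDup_length_incl ND). rewrite length_map; lia.
    intros x Hx. apply in_map_iff in Hx as [i [<- Hi]]. apply in_seq. unfold F.
    pose proof (cyc_lt n k d (i, true) Hn). lia. }
  assert (In p (map F (seq 0 n))) by (apply Hinc, in_seq; lia).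
  apply in_map_iff in H as [i [Hi Hin]]. apply in_seq in Hin. exists i; split; auto. lia.
Qed.

Lemma cyc_key n k d k' d' : 0 < n -> cyc n k d (0, true) = cyc n k' d' (0, true) ->
  forall c, cyc n k d c = cyc n k' d' c.
Proof.
  intros Hn. unfold cyc; simpl. rewrite Nat.sub_0_r.
  destruct d, d'; simpl; intros H; injection H as H; try discriminate; intros [i b]; simpl.
  - rewrite !Nat.add_0_r in H. f_equal. rewrite (Nat.Div0.add_mod k), (Nat.Div0.add_mod k'), H by lia. reflexivity.
  - f_equal. assert (k mod n = k' mod n).
    { rewrite <- (Nat.mod_add k 1 n), <- (Nat.mod_add k' 1 n) by lia.
      replace (k + 1 * n) with (k + n) by lia. replace (k' + 1 * n) with (k' + n) by lia. auto. }
    rewrite (Nat.Div0.add_mod k), (Nat.Div0.add_mod k'), H0 by lia. reflexivity.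
Qed.


Definition fin {T : Type} (A : T -> Prop) : Prop := exists l, NoDup l /\ forall x, In x l <-> A x.

Lemma fin_sub {T : Type} (A B : T -> Prop) : fin B -> (forall x, A x -> B x) -> fin A.
Proof.
  intros [l [Hn Hi]] Hab. exists (filter (fun x => dec (A x)) l). split.
  - apply NoDup_filter; auto.
  - intros x. rewrite filter_In, dec_true. split; [tauto|]. intros; split; auto. apply Hi; auto.
Qed.

Lemma fincard_le_inj {T U : Type} (A : T -> Prop) (B : U -> Prop) (F : T -> U) (G : U -> T) :
  fin A -> fin B -> (forall a, A a -> B (F a)) -> (forall a, A a -> G (F a) = a) ->
  fincard A <= fincard B.
Proof.
  intros [la [Hna Hia]] [lb [Hnb Hib]] HF HG.
  rewrite (fincard_eq A la), (fincard_eq B lb); auto.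
  rewrite <- (length_map F la). apply NoDup_incl_length.
  - apply NoDup_map_inj; auto. intros x y Hx Hy Hxy.
    rewrite <- (HG x), <- (HG y) by (apply Hia; auto). congruence.
  - intros y Hy. apply in_map_iff in Hy as [x [<- Hx]]. apply Hib, HF, Hia; auto.
Qed.

Lemma fincard_disj {T : Type} (A B C : T -> Prop) :
  fin C -> (forall x, A x -> C x) -> (forall x, B x -> C x) -> (forall x, A x -> B x -> False) ->
  fincard A + fincard B <= fincard C.
Proof.
  intros [l [Hn Hi]] HA HB HAB.
  rewrite (fincard_filter A C l), (fincard_filter B C l), (fincard_filter C C l); auto.
  apply filter_sum2; intros x _; auto.
  apply HAB.
Qed.

Lemma fincard_lt {T : Type} (A C : T -> Prop) x :
  fin C -> (forall x, A x -> C x) -> C x -> ~ A x -> fincard A < fincard C.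
Proof.
  intros [l [Hn Hi]] HA Hx Hnx.
  rewrite (fincard_filter A C l), (fincard_eq C l); auto.
  apply (filter_lt _ _ x). apply Hi; auto. apply dec_false; auto.
Qed.

Lemma fincard_fin {T : Type} (A : T -> Prop) : fin A -> exists l, NoDup l /\ (forall x, In x l <-> A x) /\ fincard A = length l.
Proof. intros [l [Hn Hi]]. exists l. repeat split; auto; try apply Hi. apply fincard_eq; auto. Qed.


Definition orb (X : complex2) (H : amap X -> Prop) (a b : Ex X) : Prop :=
  exists g, H g /\ mE g a = b.

Definition sact (X : complex2) (g : amap X) (s : Fx X * nat) : Fx X * nat :=
  (mF g (fst s), fst (mB g (fst s) (snd s, true))).

Arguments orb {X}.
Arguments sact {X}.

Lemma sg_inv (X : complex2) (H : amap X -> Prop) g : subgroup H -> H g ->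
  exists g', H g' /\ aeq (acomp g g') (aid X) /\ aeq (acomp g' g) (aid X).
Proof. intros [_ [_ [_ Hi]]] Hg. apply Hi; auto. Qed.

Lemma sg_aut (X : complex2) (H : amap X -> Prop) g : subgroup H -> H g -> is_aut g.
Proof. intros [Ha _] Hg. auto. Qed.

Lemma aeq_E (X : complex2) (a b : amap X) : aeq (acomp a b) (aid X) -> forall e, mE a (mE b e) = e.
Proof. intros [_ [HE _]] e. apply (HE e). Qed.
Lemma aeq_V (X : complex2) (a b : amap X) : aeq (acomp a b) (aid X) -> forall e, mV a (mV b e) = e.
Proof. intros [HV _] e. apply (HV e). Qed.
Lemma aeq_F (X : complex2) (a b : amap X) : aeq (acomp a b) (aid X) -> forall F, mF a (mF b F) = F.
Proof. intros [_ [_ [_ [HF _]]]] F. apply (HF F). Qed.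
Lemma aeq_O (X : complex2) (a b : amap X) : aeq (acomp a b) (aid X) -> forall e, mO a (mE b e) = mO b e.
Proof. intros [_ [_ [HO _]]] e. specialize (HO e). simpl in HO.
  destruct (mO a (mE b e)), (mO b e); simpl in *; congruence. Qed.
Lemma aeq_B (X : complex2) (a b : amap X) : aeq (acomp a b) (aid X) ->
  forall F c, fst c < blen F -> mB a (mF b F) (mB b F c) = c.
Proof. intros [_ [_ [_ [_ HB]]]] F c Hc. apply (HB F c Hc). Qed.

Lemma orb_refl X H (HG : subgroup H) e : @orb X H e e.
Proof. destruct HG as [_ [[g [Hg Ha]] _]]. exists g. split; auto. apply (proj1 (proj2 Ha)). Qed.

Lemma orb_sym X H (HG : subgroup H) a b : @orb X H a b -> orb H b a.
Proof. intros [g [Hg <-]]. destruct (sg_inv _ _ g HG Hg) as [g' [Hg' [_ H2]]].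
  exists g'. split; auto. apply (aeq_E _ _ _ H2). Qed.

Lemma orb_trans X H (HG : subgroup H) a b c : @orb X H a b -> orb H b c -> orb H a c.
Proof. intros [g [Hg <-]] [g2 [Hg2 <-]]. destruct HG as [_ [_ [Hc _]]].
  destruct (Hc g2 g Hg2 Hg) as [g3 [Hg3 Ha]]. exists g3. split; auto.
  apply (proj1 (proj2 Ha)). Qed.

Lemma aut_blen X (g : amap X) F : is_aut g -> blen (mF g F) = blen F.
Proof. intros [_ [_ [_ [_ HR]]]]. destruct (HR F) as [[Hn _] _]. auto. Qed.

Lemma aut_cyc X (g : amap X) F : is_aut g ->
  exists k d, forall c, fst c < blen F -> mB g F c = cyc (blen F) k d c.
Proof. intros [_ [_ [_ [_ HR]]]]. destruct (HR F) as [[_ Hk] _]. auto. Qed.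

Lemma aut_img X (g : amap X) F c : is_aut g -> fst c < blen F ->
  img (mF g F) (mB g F c) = option_map (oact g) (img F c).
Proof. intros [_ [_ [_ [_ HR]]]]. destruct (HR F) as [_ Hi]. auto. Qed.

Lemma mB_fst X (g : amap X) F i b b' : is_aut g -> i < blen F ->
  fst (mB g F (i, b)) = fst (mB g F (i, b')).
Proof. intros Ha Hi. destruct (aut_cyc X g F Ha) as [k [d Hk]].
  rewrite !Hk by (simpl; auto). apply cyc_fst. Qed.

Lemma mB_lt X (g : amap X) F c : is_aut g -> fst c < blen F -> fst (mB g F c) < blen (mF g F).
Proof. intros Ha Hc. rewrite (aut_blen X g F Ha). destruct (aut_cyc X g F Ha) as [k [d Hk]].
  rewrite Hk by auto. apply cyc_lt. lia. Qed.

Lemma mB_surj X (g : amap X) F p : is_aut g -> p < blen (mF g F) ->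
  exists i, i < blen F /\ fst (mB g F (i, true)) = p.
Proof. intros Ha Hp. rewrite (aut_blen X g F Ha) in Hp. destruct (aut_cyc X g F Ha) as [k [d Hk]].
  destruct (cyc_surj (blen F) k d ltac:(lia) p Hp) as [i [Hi Hi2]].
  exists i. split; auto. rewrite Hk; auto. Qed.

Lemma img_Some X (F : Fx X) c o' : img F c = Some o' ->
  exists o, nth_error (bd X F) (fst c) = Some o /\ fst o = fst o'.
Proof. unfold img. destruct (nth_error (bd X F) (fst c)) as [o|]; simpl; intros Hs; [|discriminate].
  injection Hs as <-. exists o; auto. Qed.

Lemma img_of_nth X (F : Fx X) c o : nth_error (bd X F) (fst c) = Some o ->
  img F c = Some (fst o, Bool.eqb (snd o) (snd c)).
Proof. unfold img. intros ->. reflexivity. Qed.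

Lemma side_lt X x (s : Fx X * nat) : side_at x s -> snd s < blen (fst s).
Proof. intros [o [Ho _]]. unfold blen. apply nth_error_Some. congruence. Qed.

Lemma side_act X (g : amap X) x s : is_aut g -> side_at x s -> side_at (mE g x) (sact g s).
Proof.
  intros Ha Hs. pose proof (side_lt X x s Hs) as Hl. destruct Hs as [o [Ho Hx]].
  pose proof (aut_img X g (fst s) (snd s, true) Ha Hl) as Hi.
  rewrite (img_of_nth X (fst s) (snd s, true) o Ho) in Hi. simpl in Hi.
  destruct (img_Some X _ _ _ Hi) as [o' [Ho' Hf]]. exists o'. split; auto.
  simpl in Hf. unfold oact in Hf. simpl in Hf. congruence.
Qed.

Lemma sact_inv X (g g' : amap X) x s : is_aut g -> is_aut g' -> aeq (acomp g' g) (aid X) ->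
  side_at x s -> sact g' (sact g s) = s.
Proof.
  intros Ha Ha' He Hs. pose proof (side_lt X x s Hs) as Hl. destruct s as [F j]. unfold sact; simpl in *.
  rewrite (aeq_F _ _ _ He).
  pose proof (mB_lt X g F (j, true) Ha Hl) as Hl2.
  rewrite (mB_fst X g' (mF g F) _ true (snd (mB g F (j, true))) Ha' Hl2).
  rewrite <- surjective_pairing. rewrite (aeq_B _ _ _ He F (j, true) Hl). reflexivity.
Qed.

Lemma thin_fin X M x : thin X M -> fin (@side_at X x) /\ fincard (@side_at X x) <= M.
Proof. intros Ht. destruct (Ht x) as [l [Hn [Hi Hl]]]. split. exists l; auto.
  rewrite (fincard_eq _ l); auto. Qed.

Lemma missing_inv X H M (Z : scx X) z g : subgroup H -> thin X M -> invariant H Z -> H g ->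
  fincard (missing Z z) = fincard (missing Z (mE g z)).
Proof.
  intros HG Ht HI Hg. destruct (sg_inv X H g HG Hg) as [g' [Hg' [E1 E2]]].
  pose proof (sg_aut X H g HG Hg) as Ha. pose proof (sg_aut X H g' HG Hg') as Ha'.
  assert (Fz : forall y, fin (missing Z y)).
  { intros y. apply (fin_sub _ (side_at y)). apply (thin_fin X M y Ht). intros s [Hs _]; auto. }
  apply Nat.le_antisymm.
  - apply (fincard_le_inj _ _ (sact g) (sact g')); auto.
    + intros s [Hs Hn]. split. apply side_act; auto.
      intros [HE HF]. apply Hn. split.
      * rewrite <- (aeq_E _ _ _ E2 z). apply (HI g' Hg'); auto.
      * simpl in HF. rewrite <- (aeq_F _ _ _ E2 (fst s)). apply (HI g' Hg'); auto.
    + intros s [Hs _]. eapply sact_inv; eauto.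
  - apply (fincard_le_inj _ _ (sact g') (sact g)); auto.
    + intros s [Hs Hn]. split.
      * rewrite <- (aeq_E _ _ _ E2 z). apply side_act; auto.
      * intros [HE HF]. apply Hn. split.
        -- apply (HI g Hg); auto.
        -- simpl in HF. rewrite <- (aeq_F _ _ _ E1 (fst s)). apply (HI g Hg); auto.
    + intros s [Hs _]. eapply sact_inv; eauto.
Qed.


Lemma reps_exist X (H : amap X -> Prop) (Z : scx X) es : subgroup H ->
  (forall e, In e es -> ZE Z e) -> (forall e, ZE Z e -> exists z, In z es /\ orb H z e) ->
  exists s, orbit_reps H Z s.
Proof.
  intros HG Hes Hc.
  destruct (dedupe (orb H) (orb_refl X H HG) (orb_sym X H HG) (orb_trans X H HG) es)
    as [l [Hi [Hl Hf]]].
  exists l. split; [|split].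
  - intros z Hz. apply Hes, Hi; auto.
  - intros e He. destruct (Hc e He) as [z [Hz Hze]]. destruct (Hl z Hz) as [y [Hy Hyz]].
    destruct (orb_trans X H HG _ _ _ Hyz Hze) as [g [Hg Hge]]. exists g, y; auto.
  - intros i j a b g Ha Hb Hg Hab. apply (FOP_to_idx (orb H) l Hf i j a b Ha Hb). exists g; auto.
Qed.

Lemma per_spec X (H : amap X -> Prop) (Z : scx X) : (exists s, orbit_reps H Z s) ->
  exists s, orbit_reps H Z s /\ per H Z = list_sum (map (fun z => fincard (missing Z z)) s).
Proof.
  intros [s Hs]. unfold per.
  apply (epsilon_spec (inhabits 0) (fun n => exists s, orbit_reps H Z s /\
       n = list_sum (map (fun z => fincard (missing Z z)) s))).
  exists (list_sum (map (fun z => fincard (missing Z z)) s)), s; auto.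
Qed.

Lemma reps_FOP X (H : amap X -> Prop) (Z : scx X) s : orbit_reps H Z s -> ForallOrdPairs (Rd (orb H)) s.
Proof. intros [_ [_ Hd]]. apply idx_to_FOP. intros i j a b Ha Hb [g [Hg Hgab]]. eauto. Qed.

Lemma reps_cov X (H : amap X -> Prop) (Z : scx X) s : orbit_reps H Z s ->
  forall e, ZE Z e -> exists z, In z s /\ orb H z e.
Proof. intros [_ [Hc _]] e He. destruct (Hc e He) as [g [z [Hg [Hz He2]]]]. exists z; split; auto.
  exists g; auto. Qed.

Definition eqvB X (R : Fx X) (a b : amap X) : Prop :=
  forall c, fst c < blen R -> mB a R c = mB b R c.

Lemma coset_eqv X (H : amap X -> Prop) R a b : in_coset H R a b -> eqvB X R a b.
Proof.
  intros [f [Hf [[HfR HfB] Hab]]] c Hc. destruct Hab as [_ [_ [_ [_ HB]]]].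
  rewrite (HB R c Hc). simpl. rewrite HfB by auto. rewrite HfR. reflexivity.
Qed.

Lemma eqv_coset X (H : amap X -> Prop) R a b : subgroup H -> stabH H R a -> stabH H R b ->
  eqvB X R a b -> in_coset H R a b.
Proof.
  intros HG [Ha HaR] [Hb HbR] He.
  destruct (sg_inv X H a HG Ha) as [a' [Ha' [E1 E2]]].
  pose proof (sg_aut X H a HG Ha) as Aa. pose proof (sg_aut X H b HG Hb) as Ab.
  pose proof HG as [_ [_ [Hc _]]]. destruct (Hc a' b Ha' Hb) as [f [Hf Hfe]].
  pose proof Hfe as [FV [FE [FO [FF FB]]]]. simpl in FV, FE, FO, FF, FB.
  exists f. split; auto. split; [split|].
  - rewrite FF, HbR. pose proof (aeq_F _ _ _ E2 R) as HH; rewrite HaR in HH; exact HH.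
  - intros c Hc'. rewrite FB by auto. rewrite HbR. rewrite <- He by auto.
    pose proof (aeq_B _ _ _ E2 R c Hc') as HH. rewrite HaR in HH. exact HH.
  - split; [|split; [|split; [|split]]]; simpl.
    + intros v. rewrite FV. symmetry. apply (aeq_V _ _ _ E1).
    + intros e. rewrite FE. symmetry. apply (aeq_E _ _ _ E1).
    + intros e. rewrite FO, FE. rewrite (aeq_O _ _ _ E1).
      destruct (mO a' (mE b e)), (mO b e); reflexivity.
    + intros F. rewrite FF. symmetry. apply (aeq_F _ _ _ E1).
    + intros F c Hc'. rewrite FB by auto. rewrite FF. symmetry. apply (aeq_B _ _ _ E1).
      apply mB_lt; auto.
Qed.

Lemma key_eqv X (H : amap X -> Prop) R a b : subgroup H -> 0 < blen R ->
  stabH H R a -> stabH H R b -> mB a R (0, true) = mB b R (0, true) -> eqvB X R a b.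
Proof.
  intros HG Hn [Ha HaR] [Hb HbR] Hk c Hc.
  destruct (aut_cyc X a R (sg_aut X H a HG Ha)) as [k [d Hkd]].
  destruct (aut_cyc X b R (sg_aut X H b HG Hb)) as [k' [d' Hkd']].
  rewrite Hkd, Hkd' in Hk by (simpl; lia). rewrite Hkd, Hkd' by auto.
  apply cyc_key; auto.
Qed.

Definition pdec : forall x y : nat * bool, {x = y} + {x <> y}.
Proof. decide equality; [apply Bool.bool_dec|apply Nat.eq_dec]. Defined.

Lemma autH_exist X (H : amap X -> Prop) R : subgroup H -> 0 < blen R ->
  exists l : list (amap X),
       (forall g, In g l -> stabH H R g) /\
       (forall g, stabH H R g -> exists a, In a l /\ in_coset H R a g) /\
       (forall i j a b, nth_error l i = Some a -> nth_error l j = Some b ->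
          in_coset H R a b -> i = j).
Proof.
  intros HG Hn.
  set (key := fun g : amap X => mB g R (0, true)).
  assert (build : forall K, NoDup K -> exists l, (forall a, In a l -> stabH H R a /\ In (key a) K) /\
     NoDup (map key l) /\ (forall g, stabH H R g -> In (key g) K -> exists a, In a l /\ key a = key g)).
  { induction K as [|k K IH]; intros HK.
    - exists []. split; [|split]; simpl; try tauto; try constructor.
    - inversion HK; subst. destruct (IH H3) as [l [Hl1 [Hl2 Hl3]]].
      destruct (classic (exists g, stabH H R g /\ key g = k)) as [[g [Hg Hgk]]|Hno].
      + exists (g :: l). split; [|split].
        * intros a [<-|Ha]; [split; [auto|left; auto]|]. destruct (Hl1 a Ha); split; [auto|right; auto].
        * simpl. constructor; auto. intros Hin. apply in_map_iff in Hin as [a [Hak Ha]].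
          destruct (Hl1 a Ha) as [_ Hin]. rewrite Hak, Hgk in Hin. contradiction.
        * intros g' Hg' [Hk|Hk].
          -- exists g. split; [left; auto|congruence].
          -- destruct (Hl3 g' Hg' Hk) as [a [Ha Hak]]. exists a; split; [right|]; auto.
      + exists l. split; [|split]; auto.
        * intros a Ha. destruct (Hl1 a Ha); split; [auto|right; auto].
        * intros g' Hg' [Hk|Hk].
          -- exfalso. apply Hno. exists g'; auto.
          -- auto. }
  set (K := nodup pdec (list_prod (seq 0 (blen R)) [true; false])).
  assert (HK : NoDup K) by apply NoDup_nodup.
  destruct (build K HK) as [l [Hl1 [Hl2 Hl3]]].
  exists l. split; [|split].
  - intros g Hg. apply Hl1; auto.
  - intros g Hg. assert (Hin : In (key g) K).
    { unfold K, key. destruct Hg as [Hg HgR].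
      destruct (aut_cyc X g R (sg_aut X H g HG Hg)) as [k [d Hkd]]. rewrite Hkd by (simpl; lia).
      destruct (cyc (blen R) k d (0, true)) as [p b] eqn:Ep. apply nodup_In. apply in_prod.
      - apply in_seq. pose proof (cyc_lt (blen R) k d (0, true) Hn). rewrite Ep in H0. simpl in H0. lia.
      - destruct b; simpl; auto. }
    destruct (Hl3 g Hg Hin) as [a [Ha Hak]]. exists a. split; auto.
    apply eqv_coset; auto. apply Hl1; auto. apply (key_eqv X H); auto. apply Hl1; auto.
  - intros i j a b Ha Hb Hab. apply coset_eqv in Hab.
    assert (key a = key b) by (apply Hab; simpl; auto).
    rewrite NoDup_nth_error in Hl2. apply Hl2.
    + rewrite length_map. apply nth_error_Some. congruence.
    + rewrite !nth_error_map, Ha, Hb. simpl. congruence.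
Qed.

Lemma autH_spec X (H : amap X -> Prop) R : subgroup H -> 0 < blen R ->
  exists l : list (amap X),
       (forall g, In g l -> stabH H R g) /\
       (forall g, stabH H R g -> exists a, In a l /\ in_coset H R a g) /\
       (forall i j a b, nth_error l i = Some a -> nth_error l j = Some b ->
          in_coset H R a b -> i = j) /\ autH_card H R = length l.
Proof.
  intros HG Hn. destruct (autH_exist X H R HG Hn) as [l Hl].
  unfold autH_card.
  destruct (epsilon_spec (inhabits 0) (fun n => exists l : list (amap X),
       (forall g, In g l -> stabH H R g) /\
       (forall g, stabH H R g -> exists a, In a l /\ in_coset H R a g) /\
       (forall i j a b, nth_error l i = Some a -> nth_error l j = Some b ->
          in_coset H R a b -> i = j) /\ length l = n)) as [l' [A1 [A2 [A3 A4]]]].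
  { exists (length l), l. tauto. }
  exists l'. rewrite A4. auto.
Qed.


Lemma arith (n s q m a d : nat) (lam : R) : (0 < lam)%R -> 0 < n -> 1 <= a -> 1 <= m ->
  q + s = n -> q <= d * a -> (INR s < 3 * lam * INR n)%R -> (3 * lam * INR m < / INR a)%R ->
  s * (m - 1) < d.
Proof.
  intros Hl Hn Ha Hm Hqs Hq Hs Hr.
  destruct (Nat.lt_ge_cases (s * (m - 1)) d) as [|Hd]; auto. exfalso.
  assert (Hnat : n <= s * (m * a)).
  { assert (q <= s * (m - 1) * a) by (eapply Nat.le_trans; [exact Hq|]; apply Nat.mul_le_mono_r; auto).
    replace m with ((m - 1) + 1) by lia. nia. }
  apply le_INR in Hnat. rewrite !mult_INR in Hnat.
  assert (HA : (0 < INR a)%R) by (apply lt_0_INR; lia).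
  assert (HM : (1 <= INR m)%R) by (apply (le_INR 1); auto).
  assert (HN : (0 < INR n)%R) by (apply lt_0_INR; lia).
  assert (H1 : (3 * lam * INR m * INR a < 1)%R).
  { apply (Rmult_lt_compat_r (INR a)) in Hr; auto. rewrite Rinv_l in Hr; lra. }
  assert (H2 : (INR s * (INR m * INR a) < 3 * lam * INR n * (INR m * INR a))%R).
  { apply Rmult_lt_compat_r; auto. nra. }
  nra.
Qed.


Theorem lemma3p17 (X : complex2) (M : nat) (lam : R) (H : amap X -> Prop)
  (Y : scx X) (Rc : Fx X) (Q S : list (Ex X * bool)) :
  is_complex2 X -> thin X M -> (0 < lam)%R -> subgroup H ->
  is_subcomplex Y -> cocompact H Y -> missing_3shell Y Rc Q S ->
  (INR (length S) < 3 * lam * INR (blen Rc))%R ->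
  (3 * lam * INR M < / INR (autH_card H Rc))%R ->
  per H (enlarge H Y Rc) < per H Y.
Proof.
  intros Hcx Ht Hlam HG _ [HI [vs [es [fs [_ [Hes [_ [_ [Hesc _]]]]]]]]]
    [HRY [[k [d Hread]] [_ [HQ _]]]] Hlen Hrat.
  set (n := blen Rc) in *.
  assert (Hn : 0 < n).
  { destruct (Hcx Rc) as [Hne _]. unfold n, blen. destruct (bd X Rc); [congruence|simpl; lia]. }
  assert (HIE : forall g e, H g -> ZE Y (mE g e) -> ZE Y e).
  { intros g e Hg He. destruct (sg_inv X H g HG Hg) as [g' [Hg' [E1 E2]]].
    rewrite <- (aeq_E _ _ _ E2 e). apply (HI g' Hg'); auto. }
  assert (HIF : forall g F, H g -> ZF Y (mF g F) -> ZF Y F).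
  { intros g F Hg He. destruct (sg_inv X H g HG Hg) as [g' [Hg' [E1 E2]]].
    rewrite <- (aeq_F _ _ _ E2 F). apply (HI g' Hg'); auto. }
  assert (HIo : forall a b, orb H a b -> ZE Y a -> ZE Y b).
  { intros a b [g [Hg <-]] Ha. apply (HI g Hg); auto. }
  assert (HIo' : forall a b, orb H a b -> ZE Y b -> ZE Y a).
  { intros a b [g [Hg <-]] Hb. eapply HIE; eauto. }
  set (p := fun i => fst (cyc n k d (i, true))).
  assert (Hqs : length Q + length S = n).
  { assert (E := f_equal (@length _) Hread). unfold reading in E.
    rewrite length_map, length_seq, length_map, length_app in E. fold n in E. lia. }
  assert (R1 : forall i, i < n -> exists o q, nth_error (bd X Rc) (p i) = Some o /\
     nth_error (Q ++ S) i = Some q /\ fst o = fst q).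
  { intros i Hi. assert (E := f_equal (fun l => nth_error l i) Hread). simpl in E.
    unfold reading in E. rewrite nth_error_map, nth_error_map, nth_error_seq in E.
    fold n in E. replace (Nat.ltb i n) with true in E by (symmetry; apply Nat.ltb_lt; auto).
    simpl in E. destruct (nth_error (Q ++ S) i) as [q|] eqn:Eq; simpl in E; [|discriminate].
    injection E as E. destruct (img_Some X _ _ _ E) as [o [Ho Hoq]]. exists o, q. auto. }
  assert (R2 : forall i, i < length Q -> exists o, nth_error (bd X Rc) (p i) = Some o /\ ZE Y (fst o)).
  { intros i Hi. destruct (R1 i ltac:(lia)) as [o [q [Ho [Hq Hoq]]]]. exists o. split; auto.
    rewrite nth_error_app1 in Hq by auto. rewrite Hoq. apply HQ. eapply nth_error_In; eauto. }
  assert (R3 : forall j, j < n -> exists i, i < n /\ p i = j).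
  { intros j Hj. apply cyc_surj; auto. }
  assert (R4 : forall i i', i < n -> i' < n -> p i = p i' -> i = i').
  { intros i i' Hi Hi' E. eapply cyc_inj; eauto. }
  assert (EdgeOrb : forall g j o, H g -> nth_error (bd X (mF g Rc)) j = Some o ->
     exists j0 o0, nth_error (bd X Rc) j0 = Some o0 /\ orb H (fst o0) (fst o)).
  { intros g j o Hg Ho. destruct (sg_inv X H g HG Hg) as [g' [Hg' [E1 E2]]].
    pose proof (sg_aut X H g' HG Hg') as Ag'.
    assert (Hj : j < blen (mF g Rc)) by (unfold blen; apply nth_error_Some; congruence).
    pose proof (aut_img X g' (mF g Rc) (j, true) Ag' Hj) as Hi.
    rewrite (img_of_nth X _ (j, true) o Ho) in Hi. simpl in Hi. rewrite (aeq_F _ _ _ E2) in Hi.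
    destruct (img_Some X _ _ _ Hi) as [o0 [Ho0 Hf]]. exists (fst (mB g' (mF g Rc) (j, true))), o0.
    split; auto. exists g. split; auto. rewrite Hf. simpl. apply (aeq_E _ _ _ E1). }
  set (Y' := enlarge H Y Rc).
  assert (ZY' : forall e, ZE Y' e <-> ZE Y e \/ exists g j o, H g /\
        nth_error (bd X (mF g Rc)) j = Some o /\ e = fst o) by (intros; reflexivity).
  assert (FY' : forall F, ZF Y' F <-> ZF Y F \/ exists g, H g /\ F = mF g Rc) by (intros; reflexivity).
  destruct HG as [HGa [[g0 [Hg0 Eg0]] HGr]] eqn:HGeq.
  assert (Hg0F : mF g0 Rc = Rc) by apply (proj1 (proj2 (proj2 (proj2 Eg0)))).
  assert (Ex0 : exists s, orbit_reps H Y s).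
  { apply (reps_exist X H Y es HG Hes). intros e He. destruct (Hesc e He) as [g [z [Hg [Hz Hze]]]].
    exists z; split; auto. exists g; auto. }
  destruct (per_spec X H Y Ex0) as [s0 [Hs0 Hper0]].
  assert (Ex1 : exists s, orbit_reps H Y' s).
  { apply (reps_exist X H Y' (es ++ map fst (bd X Rc)) HG).
    - intros e He. apply in_app_or in He as [He|He].
      + apply ZY'. left. apply Hes; auto.
      + apply ZY'. right. apply in_map_iff in He as [o [<- Ho]]. apply In_nth_error in Ho as [j Hj].
        exists g0, j, o. rewrite Hg0F. auto.
    - intros e He. apply ZY' in He as [He|[g [j [o [Hg [Ho ->]]]]]].
      + destruct (Hesc e He) as [g [z [Hg [Hz Hze]]]].
        exists z; split; [apply in_or_app; auto|]. exists g; auto.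
      + destruct (EdgeOrb g j o Hg Ho) as [j0 [o0 [Ho0 Horb]]]. exists (fst o0). split; auto.
        apply in_or_app; right. apply in_map. eapply nth_error_In; eauto. }
  destruct (per_spec X H Y' Ex1) as [s1 [Hs1 Hper1]].
  rewrite Hper0, Hper1. clear Hper0 Hper1.
  set (fY := fun z => fincard (missing Y z)).
  set (f' := fun z => fincard (missing Y' z)).
  set (old := filter (fun z => dec (ZE Y z)) s1).
  set (new := filter (fun z => negb (dec (ZE Y z))) s1).
  rewrite (sum_filter _ (fun z => dec (ZE Y z)) s1). fold old new.
  pose proof (reps_FOP X H Y' s1 Hs1) as F1.
  pose proof (reps_FOP X H Y s0 Hs0) as F0.
  assert (Fold : ForallOrdPairs (Rd (orb H)) old) by (apply FOP_filter; auto).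
  assert (Fnew : ForallOrdPairs (Rd (orb H)) new) by (apply FOP_filter; auto).
  assert (Hold : forall z, In z old -> ZE Y z /\ In z s1).
  { intros z Hz. apply filter_In in Hz as [Hz Hd]. rewrite dec_true in Hd. auto. }
  assert (Hnew : forall z, In z new -> ~ ZE Y z /\ In z s1 /\ ZE Y' z).
  { intros z Hz. apply filter_In in Hz as [Hz Hd]. destruct (dec (ZE Y z)) eqn:E; [discriminate|].
    rewrite dec_false in E. split; [auto|split; auto]. destruct Hs1 as [Hs1a _]. auto. }
  assert (Covold : forall e, ZE Y e -> exists z, In z old /\ orb H z e).
  { intros e He. destruct (reps_cov X H Y' s1 Hs1 e (proj2 (ZY' e) (or_introl He))) as [z [Hz Hze]].
    exists z. split; auto. apply filter_In. split; auto. apply dec_true. eapply HIo'; eauto. }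
  assert (Eold : list_sum (map fY s0) = list_sum (map fY old)).
  { apply Permutation_list_sum. apply (reps_perm (orb H) fY (orb_sym X H HG) (orb_trans X H HG))
      with (E := ZE Y); auto.
    - intros x y [g [Hg <-]]. unfold fY. eapply missing_inv; eauto.
    - destruct Hs0 as [Ha _]; auto.
    - intros z Hz; apply Hold; auto.
    - apply (reps_cov X H Y s0 Hs0). }
  rewrite Eold.
  set (Dz := fun (z : Ex X) (s : Fx X * nat) => side_at z s /\ exists h, H h /\ fst s = mF h Rc).
  assert (FinS : forall z, fin (@side_at X z)) by (intros z; apply (thin_fin X M z Ht)).
  assert (St5 : forall z, In z old -> f' z + fincard (Dz z) <= fY z).
  { intros z Hz. destruct (Hold z Hz) as [HzY _]. unfold f', fY.
    apply fincard_disj.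
    - apply (fin_sub _ (side_at z)); [apply FinS|]. intros s [Hs _]; auto.
    - intros s [Hs Hn']. split; auto. intros [HE HF]. apply Hn'.
      split; [apply ZY'; auto|apply FY'; auto].
    - intros s [Hs [h [Hh Hf]]]. split; auto. intros [_ HF]. apply HRY. rewrite Hf in HF. eapply HIF; eauto.
    - intros s [Hs Hn'] [_ [h [Hh Hf]]]. apply Hn'.
      split; [apply ZY'; auto|apply FY'; right; exists h; auto]. }
  assert (St6 : forall w, In w new -> f' w + 1 <= M).
  { intros w Hw. destruct (Hnew w Hw) as [HwY [Hws HwY']].
    apply ZY' in HwY' as [|[g [j [o [Hg [Ho Hwo]]]]]]; [contradiction|]. subst w.
    destruct (thin_fin X M (fst o) Ht) as [Fs Cs].
    assert (fincard (missing Y' (fst o)) < fincard (side_at (fst o))).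
    { apply (fincard_lt _ _ (mF g Rc, j) Fs).
      - intros s [Hs _]; auto.
      - exists o; auto.
      - intros [_ Hn']. apply Hn'. split.
        + apply ZY'; right; exists g, j, o; auto.
        + apply FY'; right; exists g; auto. }
    unfold f'. lia. }
  assert (St7 : length new <= length S).
  { assert (Hpsi : forall w, In w new -> exists i, (length Q <= i /\ i < n) /\
        exists o, nth_error (bd X Rc) (p i) = Some o /\ orb H (fst o) w).
    { intros w Hw. destruct (Hnew w Hw) as [HwY [Hws HwY']].
      apply ZY' in HwY' as [|[g [j [o [Hg [Ho Hwo]]]]]]; [contradiction|].
      destruct (EdgeOrb g j o Hg Ho) as [j0 [o0 [Ho0 Horb]]].
      assert (Hj0 : j0 < n) by (unfold n, blen; apply nth_error_Some; congruence).
      destruct (R3 j0 Hj0) as [i [Hi Hpi]]. exists i. split.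
      - split; auto. destruct (Nat.lt_ge_cases i (length Q)) as [Hq|Hq]; auto.
        exfalso. destruct (R2 i Hq) as [o1 [Ho1 HY1]]. rewrite Hpi, Ho0 in Ho1. injection Ho1 as <-.
        apply HwY. rewrite Hwo. eapply HIo; eauto.
      - exists o0. rewrite Hpi. split; auto. rewrite Hwo; auto. }
    destruct (my_choice 0 (fun w i => In w new -> (length Q <= i /\ i < n) /\
        exists o, nth_error (bd X Rc) (p i) = Some o /\ orb H (fst o) w)) as [psi Hpsi'].
    { intros w. destruct (classic (In w new)) as [Hw|Hw].
      - destruct (Hpsi w Hw) as [i Hi]; exists i; auto.
      - exists 0; tauto. }
    rewrite <- (length_map psi new).
    replace (length S) with (length (seq (length Q) (length S))) by apply length_seq.
    apply NoDup_incl_length.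
    - apply NoDup_map_inj.
      + intros w w' Hw Hw' E. destruct (Hpsi' w Hw) as [_ [o [Ho Ho']]].
        destruct (Hpsi' w' Hw') as [_ [o2 [Ho2 Ho2']]].
        rewrite E in Ho. rewrite Ho in Ho2. injection Ho2 as <-.
        apply (FOP_eq (orb H) new); auto. eapply (orb_trans X H HG); [|exact Ho2'].
        apply (orb_sym X H HG); auto.
      + apply (FOP_NoDup (orb H)); auto. apply orb_refl; auto.
    - intros i Hi. apply in_map_iff in Hi as [w [<- Hw]]. apply in_seq. destruct (Hpsi' w Hw). lia. }
  destruct (my_choice (@nil (Fx X * nat)) (fun z l => NoDup l /\ (forall s, In s l <-> Dz z s) /\
      fincard (Dz z) = length l)) as [Lz HLz].
  { intros z. apply fincard_fin. apply (fin_sub _ (side_at z)); [apply FinS|]. intros s [Hs _]; auto. }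
  set (T := concat (map Lz old)).
  assert (HT : forall s, In s T -> exists z, In z old /\ Dz z s).
  { intros s Hs. apply in_concat in Hs as [l0 [Hl Hs]]. apply in_map_iff in Hl as [z [<- Hz]].
    exists z. split; auto. apply HLz; auto. }
  assert (LT : length T = list_sum (map (fun z => fincard (Dz z)) old)).
  { unfold T. rewrite length_concat_map. f_equal. apply map_ext. intros z.
    destruct (HLz z) as [_ [_ E]]. auto. }
  destruct (my_choice g0 (fun s h => In s T -> H h /\ mF h Rc = fst s)) as [hs Hhs].
  { intros s. destruct (classic (In s T)) as [Hs|Hs].
    - destruct (HT s Hs) as [z [_ [_ [h [Hh Hf]]]]]. exists h. auto.
    - exists g0; tauto. }
  destruct (autH_spec X H Rc HG Hn) as [l [Hl1 [Hl2 [Hl3 HA]]]].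
  pose proof HGr as [Hcl _].
  assert (Hch : forall i, i < length Q -> exists x : (Fx X * nat) * amap X * amap X,
     let '(s, g, a) := x in In s T /\ H g /\ mF g (fst s) = Rc /\
       fst (mB g (fst s) (snd s, true)) = p i /\
       In a l /\ exists b, H b /\ aeq b (acomp g (hs s)) /\ in_coset H Rc a b).
  { intros i Hi. destruct (R2 i Hi) as [o [Ho HoY]].
    destruct (Covold (fst o) HoY) as [z [Hz [g [Hg Hgz]]]].
    destruct (sg_inv X H g HG Hg) as [g' [Hg' [E1 E2]]].
    pose proof (sg_aut X H g HG Hg) as Ag. pose proof (sg_aut X H g' HG Hg') as Ag'.
    assert (Hside : side_at (fst o) (Rc, p i)) by (exists o; auto).
    set (s := sact g' (Rc, p i)).
    assert (Hsz : side_at z s).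
    { rewrite <- (aeq_E _ _ _ E2 z). rewrite Hgz. apply side_act; auto. }
    assert (HsT : In s T).
    { apply in_concat. exists (Lz z). split; [apply in_map; auto|]. apply HLz. split; auto.
      exists g'. split; auto. }
    destruct (Hhs s HsT) as [Hh HhR].
    destruct (Hcl g (hs s) Hg Hh) as [b [Hb Hbe]].
    assert (Hstab : stabH H Rc b).
    { split; auto. destruct Hbe as [_ [_ [_ [BF _]]]]. simpl in BF. rewrite BF, HhR.
      unfold s, sact; simpl. apply (aeq_F _ _ _ E1). }
    destruct (Hl2 b Hstab) as [a [Ha Hab]].
    exists (s, g, a). split; [auto|split; [auto|split; [|split; [|split; [auto|]]]]].
    - unfold s, sact; simpl. apply (aeq_F _ _ _ E1).
    - pose proof (sact_inv X g' g (fst o) (Rc, p i) Ag' Ag E1 Hside) as Hsi.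
      exact (f_equal snd Hsi).
    - exists b; auto. }
  destruct (my_choice ((Rc, 0), g0, g0) (fun i (x : (Fx X * nat) * amap X * amap X) => i < length Q ->
     let '(s, g, a) := x in In s T /\ H g /\ mF g (fst s) = Rc /\
       fst (mB g (fst s) (snd s, true)) = p i /\
       In a l /\ exists b, H b /\ aeq b (acomp g (hs s)) /\ in_coset H Rc a b)) as [Fq HFq].
  { intros i. destruct (Nat.lt_ge_cases i (length Q)) as [Hi|Hi].
    - destruct (Hch i Hi) as [x Hx]. exists x; auto.
    - exists ((Rc, 0), g0, g0). intros; lia. }
  assert (St8 : length Q <= length T * length l).
  { rewrite <- length_prod. rewrite <- (length_seq (length Q) 0) at 1.
    rewrite <- (length_map (fun i => (fst (fst (Fq i)), snd (Fq i))) (seq 0 (length Q))).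
    apply NoDup_incl_length.
    - apply NoDup_map_inj; [|apply seq_NoDup].
      intros i i' Hi Hi' E. apply in_seq in Hi, Hi'.
      pose proof (HFq i ltac:(lia)) as A1. pose proof (HFq i' ltac:(lia)) as A2.
      destruct (Fq i) as [[s g] a], (Fq i') as [[s' g'] a']. simpl in E. injection E as <- <-.
      destruct A1 as [HsT [Hg [HgR [Hp [Ha [b [Hb [Hbe Hab]]]]]]]].
      destruct A2 as [_ [Hg' [HgR' [Hp' [_ [b' [Hb' [Hbe' Hab']]]]]]]].
      destruct (Hhs s HsT) as [Hh HhR].
      destruct (HT s HsT) as [z [_ [Hsz _]]].
      pose proof (side_lt X z s Hsz) as Hsl.
      pose proof (sg_aut X H (hs s) HG Hh) as Ah.
      rewrite <- HhR in Hsl.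
      destruct (mB_surj X (hs s) Rc (snd s) Ah Hsl) as [q [Hq Hq']].
      rewrite HhR in Hsl.
      assert (Key : forall g b, H g -> aeq b (acomp g (hs s)) ->
                fst (mB b Rc (q, true)) = fst (mB g (fst s) (snd s, true))).
      { intros g1 b1 Hg1 [_ [_ [_ [_ BB]]]]. simpl in BB. rewrite BB by (simpl; auto).
        rewrite HhR. rewrite (surjective_pairing (mB (hs s) Rc (q, true))), Hq'.
        apply mB_fst; [apply (sg_aut X H g1 HG Hg1)|auto]. }
      apply coset_eqv in Hab, Hab'.
      assert (E : mB b Rc (q, true) = mB b' Rc (q, true)).
      { rewrite <- Hab, <- Hab'; auto. }
      apply R4; try lia. rewrite <- Hp, <- Hp'. rewrite <- (Key g b), <- (Key g' b'); auto.
      rewrite E. reflexivity.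
    - intros x Hx. apply in_map_iff in Hx as [i [<- Hi]]. apply in_seq in Hi.
      pose proof (HFq i ltac:(lia)) as A1. destruct (Fq i) as [[s g] a].
      destruct A1 as [HsT [_ [_ [_ [Ha _]]]]]. simpl. apply in_prod; auto. }
  assert (HM : 1 <= M).
  { destruct (R1 0 Hn) as [o [_ [Ho _]]]. destruct (Ht (fst o)) as [L [_ [HiL HlL]]].
    assert (In (Rc, p 0) L) by (apply HiL; exists o; auto). destruct L; [contradiction|simpl in HlL; lia]. }
  assert (HA1 : 1 <= length l).
  { destruct (length l) eqn:El; [|lia]. exfalso. rewrite HA in Hrat. simpl in Hrat.
    rewrite Rinv_0 in Hrat. pose proof (pos_INR M). nra. }
  pose proof (arith n (length S) (length Q) M (length l) (length T) lam Hlam Hn HA1 HM Hqs St8 Hlen)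
    as Har. rewrite HA in Hrat. specialize (Har Hrat).
  assert (S5 : list_sum (map f' old) + list_sum (map (fun z => fincard (Dz z)) old) <= list_sum (map fY old)).
  { rewrite <- sum_add. apply sum_le. auto. }
  assert (S6 : list_sum (map f' new) <= length new * (M - 1)).
  { apply sum_const_le. intros w Hw. specialize (St6 w Hw). lia. }
  assert (length new * (M - 1) <= length S * (M - 1)) by (apply Nat.mul_le_mono_r; auto).
  lia.
Qed.
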